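(* Let $G=(V,E)$ be a $d$-regular graph on $n$ vertices whose conductance $\phi^G(V)$ is at least $\varphi$. Let each edge $e\in E$ independently receive a uniformly random label $Y(e)\in\{0,1\}$, and let $G'=(V\times\{0,1\},E')$ be the graph where, for each $e=(u,v)\in E$, $E'$ contains the two edges $(u^0,v^0),(u^1,v^1)$ if $Y(e)=0$ and the two edges $(u^0,v^1),(u^1,v^0)$ if $Y(e)=1$ (writing $v^b$ for $(v,b)$). Then with probability at least $1-2^{2n}e^{-dn/256}$, $G'$ has conductance $\phi^{G'}(V\times\{0,1\})\ge\min(\varphi/4,1/32)$.
   Context: $\mathrm{vol}(S)=\sum_{v\in S}\deg(v)$; $\phi^G_C(S)=|E(S,C\setminus S)|/\mathrm{vol}(S)$; the conductance of $G$ is $\phi^G(V)=\min\{\phi^G_V(S):0<\mathrm{vol}(S)\le\mathrm{vol}(V)/2\}$. *)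

(* Defs.v *)
From Stdlib Require Import Reals.
From mathcomp Require Import all_boot.

Set Implicit Arguments.
Unset Strict Implicit.
Unset Printing Implicit Defensive.

Section Graphs.
Variable T : finType.

Definition simple_graph (r : rel T) : Prop :=
  symmetric r /\ irreflexive r.

Definition deg (r : rel T) (x : T) : nat := #|[set y | r x y]|.

Definition regular (r : rel T) (d : nat) : Prop := forall x, deg r x = d.

Definition vol (r : rel T) (S : {set T}) : nat := \sum_(x in S) deg r x.

(* |E(S, V \ S)| : edges with one endpoint in S and the other outside S;
   each such edge corresponds to exactly one ordered pair (x in S, y notin S). *)
Definition cut (r : rel T) (S : {set T}) : nat :=
  #|[set p : T * T | [&& p.1 \in S, p.2 \notin S & r p.1 p.2]]|.

(* phi^G(V) >= c, written out from the definition of phi^G(V) as a minimum of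
   phi_V(S) = |E(S,V\S)|/vol(S) over all S with 0 < vol(S) <= vol(V)/2. *)
Definition conductance_ge (r : rel T) (c : R) : Prop :=
  forall S : {set T}, (0 < vol r S)%N -> (2 * vol r S <= vol r setT)%N ->
    Rle c (Rdiv (INR (cut r S)) (INR (vol r S))).
End Graphs.

Section Lift.
Variable V : finType.
Variable e : rel V.

Definition is_edge (S : {set V}) : bool :=
  [exists u, exists v, [&& u != v, e u v & S == [set u; v]]].

Definition edgeT : finType := {S : {set V} | is_edge S}.

Definition lab (Y : {ffun edgeT -> bool}) (S : {set V}) : bool :=
  match @insub _ is_edge edgeT S with Some s => Y s | None => false end.

(* G' on V x {0,1}: (u,a) ~ (v,b) iff uv is an edge of G and
   Y(uv) = 0 when a = b, Y(uv) = 1 when a <> b. *)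
Definition dcover (Y : {ffun edgeT -> bool}) : rel (V * bool) :=
  fun x y => e x.1 y.1 && (lab Y [set x.1; y.1] == (x.2 != y.2)).
End Lift.

(* Main.v *)
Require Import Defs.
From Stdlib Require Import Reals Lra.
From mathcomp Require Import all_boot.
From mathcomp Require Import zify.

Set Implicit Arguments.
Unset Strict Implicit.
Unset Printing Implicit Defensive.
Delimit Scope R_scope with Re.



Lemma card_sumP (T : finType) (P : pred T) :
  #|[set x | P x]| = \sum_x (P x : nat).
Proof.
rewrite -sum1_card big_mkcond /=; apply: eq_bigr => x _; rewrite inE.
by case: (P x).
Qed.

Lemma card_sumS (T : finType) (A : {set T}) :
  #|A| = \sum_x (x \in A : nat).
Proof.
rewrite -sum1_card big_mkcond /=; apply: eq_bigr => x _.
by case: (x \in A).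
Qed.

Lemma card_pair (X Y : finType) (R : X -> Y -> bool) :
  #|[set p : X * Y | R p.1 p.2]| = \sum_x #|[set y | R x y]|.
Proof.
rewrite card_sumP -(pair_bigA _ (fun x y => (R x y : nat))) /=; apply: eq_bigr => x _.
by rewrite card_sumP.
Qed.

Lemma card_inj_le (X Y : finType) (f : X -> Y) (A : {set X}) (B : {set Y}) :
  injective f -> (forall x, x \in A -> f x \in B) -> #|A| <= #|B|.
Proof.
move=> inj H; rewrite -(card_imset A inj); apply: subset_leq_card.
by apply/subsetP => y /imsetP [x Hx ->]; apply: H.
Qed.

Lemma cardU_le (T : finType) (A B : {set T}) : #|A :|: B| <= #|A| + #|B|.
Proof. by rewrite cardsU leq_subr. Qed.

Lemma INR_expn (m n : nat) : INR (m ^ n) = pow (INR m) n.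
Proof.
elim: n => [|n IH]; first by rewrite expn0.
by rewrite expnS -multE mult_INR IH.
Qed.

Lemma exp_pow_nat (x : R) (n : nat) : pow (exp x) n = exp (INR n * x).
Proof.
elim: n => [|n IH] /=; first by rewrite Rmult_0_l exp_0.
rewrite IH -exp_plus; congr exp.
case: n {IH} => [|n]; rewrite ?S_INR /=; lra.
Qed.

Lemma pow_lt_inv (x y : R) (n : nat) :
  (0 <= x)%Re -> (0 <= y)%Re -> (pow x n.+1 <= pow y n.+1)%Re -> (x <= y)%Re.
Proof.
move=> hx hy H; destruct (Rle_lt_dec x y) as [|Hlt]; first by [].
exfalso.
have : (pow y n.+1 < pow x n.+1)%Re.
  elim: n {H} => [|n IH]; first by rewrite /= !Rmult_1_r.
  have h1 := pow_le y n hy.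
  have hx0 : (0 < x)%Re by lra.
  have h2 := pow_lt x n hx0.
  rewrite /= in IH *.
  have h3 : (0 <= y * pow y n)%Re by apply: Rmult_le_pos.
  have h4 : (y * (y * pow y n) <= y * (x * pow x n))%Re.
    by apply: Rmult_le_compat_l => //; apply: Rlt_le.
  have h5 : (0 < x * pow x n)%Re by apply: Rmult_lt_0_compat.
  nra.
lra.
Qed.


Lemma sum_matches (E : finType) (F : {set E}) (t : E -> bool) :
  \sum_(Y : {ffun E -> bool}) 2 ^ #|[set f in F | Y f == t f]|
  = 3 ^ #|F| * 2 ^ (#|E| - #|F|).
Proof.
pose G f b := if (f \in F) && (b == t f) then 2 else 1.
rewrite (eq_bigr (fun Y : {ffun E -> bool} => \prod_f G f (Y f))); last first.
  move=> Y _; rewrite -prod_nat_const big_mkcond /=; apply: eq_bigr => f _.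
  by rewrite /G inE.
rewrite -bigA_distr_bigA /=.
rewrite (eq_bigr (fun f => if f \in F then 3 else 2)); last first.
  by move=> f _; rewrite big_bool /G /=; case: (f \in F); case: (t f).
rewrite (bigID (fun f => f \in F)) /=.
rewrite (eq_bigr (fun _ => 3)); last by move=> f ->.
rewrite [X in _ * X](eq_bigr (fun _ => 2)); last by move=> f /negbTE ->.
rewrite prod_nat_const.
have -> : \prod_(i | i \notin F) 2 = 2 ^ #|~: F|.
  by rewrite -prod_nat_const; apply: eq_bigl => i; rewrite inE.
have -> : #|~: F| = #|E| - #|F| by have := cardsC F; lia.
done.
Qed.

Lemma count_bound (E : finType) (F : {set E}) (t : E -> bool) (k : nat) :
  k <= #|F| ->
  #|[set Y : {ffun E -> bool} | #|[set f in F | Y f != t f]| <= k]| * 4 ^ #|F|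
  <= 3 ^ #|F| * 2 ^ #|E| * 2 ^ k.
Proof.
move=> hk.
set B := [set Y : {ffun E -> bool} | _].
have hsplit : forall Y : {ffun E -> bool},
    #|[set f in F | Y f == t f]| + #|[set f in F | Y f != t f]| = #|F|.
  move=> Y; rewrite -(cardsID [set f | Y f == t f] F); congr (_ + _); apply: eq_card => f; rewrite !inE.
    by rewrite andbC.
  by rewrite andbC.
have h1 : #|B| * 2 ^ (#|F| - k) <= 3 ^ #|F| * 2 ^ (#|E| - #|F|).
  rewrite -(sum_matches F t) -sum1_card big_distrl /=.
  rewrite [X in _ <= X](bigID (fun Y => Y \in B)) /=.
  apply: leq_trans (leq_addr _ _).
  apply: leq_sum => Y; rewrite inE mul1n => HY.
  apply: leq_pexp2l => //; have := hsplit Y; lia.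
have hE : #|F| <= #|E| by apply: max_card.
have e1 : 2 ^ (#|F| - k) * 2 ^ k = 2 ^ #|F| by rewrite -expnD subnK.
have e2 : 2 ^ (#|E| - #|F|) * 2 ^ #|F| = 2 ^ #|E| by rewrite -expnD subnK.
have e3 : 4 ^ #|F| = 2 ^ #|F| * 2 ^ #|F| by rewrite -expnMn.
set a := 2 ^ (#|F| - k) in h1 e1; set b := 2 ^ k in e1 *; set c := 2 ^ #|F| in e1 e2 e3.
set g := 2 ^ (#|E| - #|F|) in h1 e2; set h := 2 ^ #|E| in e2 *.
set x := #|B| in h1 *; set y := 3 ^ #|F| in h1 *.
rewrite e3 -e2 -{1}e1.
have := leq_mul h1 (leqnn (b * c)).
nia.
Qed.


Lemma natN (m k0 q : nat) : 32 * k0 <= q -> 7 * q < 32 * m ->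
  (3 ^ m * 2 ^ k0) ^ 256 * 3 ^ q <= (4 ^ m) ^ 256.
Proof.
move=> h1 h2.
have e1 : (3 ^ m * 2 ^ k0) ^ 256 * 3 ^ q = 3 ^ (256 * m + q) * 2 ^ (256 * k0).
  by rewrite expnMn -!expnM expnD [m * 256]mulnC [k0 * 256]mulnC; nia.
have e2 : (4 ^ m) ^ 256 = 2 ^ (512 * m) by rewrite -expnM -(expnM 2 2); congr (2 ^ _); lia.
rewrite e1 e2 -(@leq_exp2r _ _ 7) // -!expnM expnMn -!expnM.
have a1 : 3 ^ ((256 * m + q) * 7) <= 3 ^ (1824 * m).
  apply: leq_pexp2l => //; lia.
have a2 : 3 ^ (1824 * m) <= 2 ^ (3040 * m).
  have -> : 1824 * m = 3 * (608 * m) by lia.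
  have -> : 3040 * m = 5 * (608 * m) by lia.
  rewrite (expnM 3 3) (expnM 2 5).
  have hm : 0 < 608 * m by clear -h2; lia.
  have h : 3 ^ 3 <= 2 ^ 5 by [].
  rewrite (leq_exp2r _ _ hm); exact h.
have a3 : 2 ^ (256 * k0 * 7) <= 2 ^ (256 * m) by apply: leq_pexp2l => //; clear -h1 h2; lia.
apply: (leq_trans (leq_mul (leq_trans a1 a2) a3)).
rewrite -expnD; apply: leq_pexp2l => //; clear -h1 h2; lia.
Qed.

Lemma real_bound (nb E m k0 q : nat) :
  nb * 4 ^ m <= 3 ^ m * 2 ^ E * 2 ^ k0 -> 32 * k0 <= q -> 7 * q < 32 * m ->
  (INR nb <= INR (2 ^ E) * exp (- (INR q / 256)))%Re.
Proof.
move=> h0 h1 h2.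
have hN := natN h1 h2.
set w := exp (- (INR q / 256)).
set P := INR (3 ^ m * 2 ^ k0).
set Q := INR (4 ^ m).
have hQ : (0 < Q)%Re by rewrite /Q INR_expn; apply: pow_lt; simpl; lra.
have hP : (0 <= P)%Re by apply: pos_INR.
have hw : (0 < w)%Re by apply: exp_pos.
have hnb : (INR nb * Q <= INR (2 ^ E) * P)%Re.
  rewrite /Q /P -!mult_INR; apply: le_INR; apply/leP.
  rewrite !multE; apply: leq_trans h0 _; by rewrite mulnA [2 ^ E * _]mulnC.
have hN' : (pow P 256 * INR (3 ^ q) <= pow Q 256)%Re.
  rewrite /P /Q -!INR_expn -mult_INR; apply: le_INR; apply/leP.
  by rewrite multE.
have he : (exp (INR q) <= INR (3 ^ q))%Re.
  rewrite INR_expn -[INR q]Rmult_1_r -exp_pow_nat.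
  apply: pow_incr; split; [apply: Rlt_le; apply: exp_pos|].
  have := exp_le_3; simpl; lra.
have hw256 : (pow w 256 * exp (INR q) = 1)%Re.
  rewrite /w exp_pow_nat -exp_plus.
  have -> : (INR 256 * - (INR q / 256) + INR q = 0)%Re.
    have -> : INR 256 = 256%Re by rewrite !S_INR /=; lra.
    lra.
  by rewrite exp_0.
have hPw : (P <= Q * w)%Re.
  apply: (@pow_lt_inv _ _ 255) => //.
    by apply: Rmult_le_pos; lra.
  rewrite Rpow_mult_distr.
  have hp0 : (0 <= pow P 256)%Re by apply: pow_le.
  have hq0 : (0 < pow w 256)%Re by apply: pow_lt.
  have hexp : (0 < exp (INR q))%Re by apply: exp_pos.
  have : (pow P 256 * exp (INR q) <= pow Q 256)%Re.
    apply: Rle_trans hN'; apply: Rmult_le_compat_l => //.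
  move=> H.
  have -> : pow P 256 = (pow P 256 * exp (INR q) * pow w 256)%Re.
    by rewrite Rmult_assoc [(exp _ * _)%Re]Rmult_comm hw256 Rmult_1_r.
  by apply: Rmult_le_compat_r => //; apply: Rlt_le.
have h2E : (0 <= INR (2 ^ E))%Re by apply: pos_INR.
have : (INR nb * Q <= INR (2 ^ E) * w * Q)%Re.
  apply: Rle_trans hnb _; rewrite Rmult_assoc [(w * Q)%Re]Rmult_comm.
  by apply: Rmult_le_compat_l.
move=> H; apply: (Rmult_le_reg_r Q) => //.
Qed.


Lemma deg_dcover (V : finType) (e : rel V) (Y : {ffun edgeT e -> bool}) x :
  deg (dcover Y) x = deg e x.1.
Proof.
rewrite /deg card_sumP -(pair_bigA _ (fun v b => (dcover Y x (v, b) : nat))) /=.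
rewrite card_sumP; apply: eq_bigr => v _.
rewrite big_bool /dcover /=.
by case: (e x.1 v); case: (lab Y [set x.1; v]); case: x.2.
Qed.

Lemma vol_reg (T : finType) (r : rel T) (d : nat) (A : {set T}) :
  regular r d -> vol r A = d * #|A|.
Proof.
by move=> hr; rewrite /vol (eq_bigr (fun _ => d)) // sum_nat_const mulnC.
Qed.

Lemma vol_dcover (V : finType) (e : rel V) (d : nat) (Y : {ffun edgeT e -> bool})
  (A : {set V * bool}) : regular e d -> vol (dcover Y) A = d * #|A|.
Proof.
move=> hr; apply: vol_reg => x; by rewrite deg_dcover hr.
Qed.

Definition qo (V : finType) (e : rel V) (q : pred (edgeT e)) (s : {set V}) : bool :=
  match @insub _ (is_edge e) (edgeT e) s with Some f => q f | None => false end.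

Lemma is_edge2 (V : finType) (e : rel V) (u v : V) :
  simple_graph e -> e u v -> is_edge e [set u; v].
Proof.
move=> [hs hi] he; apply/existsP; exists u; apply/existsP; exists v.
rewrite he eqxx andbT /= andbT.
by apply/negP => /eqP E; rewrite E hi in he.
Qed.

Lemma fiber_card (V : finType) (e : rel V) (f : edgeT e) :
  simple_graph e ->
  #|[set p : V * V | e p.1 p.2 && (val f == [set p.1; p.2])]| = 2.
Proof.
move=> [hs hi].
have := valP f; case/existsP => u /existsP [v /and3P [Huv Heuv /eqP Hf]].
have -> : [set p : V * V | e p.1 p.2 && (val f == [set p.1; p.2])] = [set (u, v); (v, u)].
  apply/setP => [[a b]]; rewrite !inE /= Hf !xpair_eqE.
  apply/idP/idP.
    case/andP => Hab /eqP Hs.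
    have Ha : a \in [set u; v] by rewrite Hs !inE eqxx.
    have Hb : b \in [set u; v] by rewrite Hs !inE eqxx orbT.
    have nab : a != b by apply/negP => /eqP E; rewrite E hi in Hab.
    rewrite !inE in Ha Hb.
    case/orP: Ha => /eqP Ea; case/orP: Hb => /eqP Eb; subst a b;
      rewrite ?eqxx ?andbT ?orbT //; by rewrite eqxx in nab.
  case/orP => /andP [/eqP -> /eqP ->]; first by rewrite Heuv eqxx.
  by rewrite hs Heuv /= setUC.
rewrite cards2.
suff -> : (u, v) != (v, u) by [].
by rewrite xpair_eqE negb_and Huv.
Qed.

Lemma qo_edge (V : finType) (e : rel V) (q : pred (edgeT e)) (u v : V)
  (H : is_edge e [set u; v]) :
  qo q [set u; v] = q (Sub [set u; v] H).
Proof. by rewrite /qo insubT. Qed.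

Lemma lab_edge (V : finType) (e : rel V) (Y : {ffun edgeT e -> bool}) (u v : V)
  (H : is_edge e [set u; v]) :
  lab Y [set u; v] = Y (Sub [set u; v] H).
Proof. by rewrite /lab insubT. Qed.

Lemma fiber2 (V : finType) (e : rel V) (q : pred (edgeT e)) :
  simple_graph e ->
  #|[set p : V * V | e p.1 p.2 && qo q [set p.1; p.2]]| = 2 * #|[set f | q f]|.
Proof.
move=> hsg.
have hR : 2 * #|[set f | q f]| =
   \sum_(f : edgeT e) \sum_(p : V * V)
      ((q f && (e p.1 p.2 && (val f == [set p.1; p.2]))) : nat).
  rewrite card_sumP big_distrr /=; apply: eq_bigr => f _.
  case: (q f) => /=; last by rewrite big1.
  by rewrite -card_sumP fiber_card.
rewrite hR exchange_big card_sumP /=; apply: eq_bigr => p _.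
case He: (e p.1 p.2); last by rewrite big1 // => f _; rewrite andbF.
have Hie := is_edge2 hsg He.
rewrite /= (qo_edge q Hie).
set f0 := Sub [set p.1; p.2] Hie : edgeT e.
rewrite (bigD1 f0) //= eqxx andbT big1 ?addn0 // => f Hf.
have -> : (val f == [set p.1; p.2]) = (f == f0).
  by rewrite -val_eqE.
by rewrite (negbTE Hf) andbF.
Qed.


Definition Sb (V : finType) (S : {set V * bool}) (b : bool) : {set V} :=
  locked [set v | (v, b) \in S].
Definition sT (V : finType) (S : {set V * bool}) : {set V} :=
  locked (Sb S false :|: Sb S true).
Definition sD (V : finType) (S : {set V * bool}) : {set V} :=
  locked (Sb S false :&: Sb S true).
Definition sU (V : finType) (S : {set V * bool}) : {set V} :=
  locked (sT S :\: sD S).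

Lemma in_Sb (V : finType) (S : {set V * bool}) b v : (v \in Sb S b) = ((v, b) \in S).
Proof. by rewrite /Sb -lock inE. Qed.
Lemma in_sT (V : finType) (S : {set V * bool}) v :
  (v \in sT S) = ((v, false) \in S) || ((v, true) \in S).
Proof. by rewrite /sT -lock inE !in_Sb. Qed.
Lemma in_sD (V : finType) (S : {set V * bool}) v :
  (v \in sD S) = ((v, false) \in S) && ((v, true) \in S).
Proof. by rewrite /sD -lock inE !in_Sb. Qed.
Lemma in_sU (V : finType) (S : {set V * bool}) v :
  (v \in sU S) = ~~ (((v, false) \in S) && ((v, true) \in S)) &&
                 (((v, false) \in S) || ((v, true) \in S)).
Proof. by rewrite /sU -lock inE in_sT in_sD. Qed.
Definition inS := (in_Sb, in_sT, in_sD, in_sU).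

Lemma memS_U (V : finType) (S : {set V * bool}) v b :
  v \in sU S -> ((v, b) \in S) = (b == (v \in Sb S true)).
Proof.
rewrite !inS.
by case: b; case: ((v, false) \in S); case: ((v, true) \in S).
Qed.

Lemma memS_D (V : finType) (S : {set V * bool}) v b :
  v \in sD S -> (v, b) \in S.
Proof. by rewrite !inS => /andP [h0 h1]; case: b. Qed.

Lemma memS_notT (V : finType) (S : {set V * bool}) v b :
  v \notin sT S -> (v, b) \notin S.
Proof. by rewrite !inS => /norP [h0 h1]; case: b. Qed.

Lemma memS_self (V : finType) (S : {set V * bool}) v :
  v \in sT S -> (v, v \in Sb S true) \in S.
Proof.
rewrite !inS; case H1: ((v, true) \in S) => //=.
by rewrite orbF.
Qed.

Lemma U_sub_T (V : finType) (S : {set V * bool}) v : v \in sU S -> v \in sT S.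
Proof. by rewrite !inS => /andP []. Qed.

Lemma cardS2 (V : finType) (S : {set V * bool}) :
  #|S| = #|Sb S false| + #|Sb S true|.
Proof.
rewrite card_sumS (eq_bigr (fun p => ((p.1, p.2) \in S : nat))); last by case.
rewrite -(pair_bigA _ (fun v b => ((v, b) \in S : nat))) /=.
rewrite !card_sumS -big_split /=; apply: eq_bigr => v _.
by rewrite big_bool !in_Sb addnC.
Qed.

Lemma cardTD (V : finType) (S : {set V * bool}) :
  #|sT S| + #|sD S| = #|Sb S false| + #|Sb S true|.
Proof. by rewrite /sT /sD -!lock cardsUI. Qed.

Lemma cardUD (V : finType) (S : {set V * bool}) :
  #|sU S| + #|sD S| = #|sT S|.
Proof.
rewrite -(cardsID (sD S) (sT S)) addnC /sU -lock.
rewrite (setIidPr _) //.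
by rewrite /sT /sD -!lock; apply: subset_trans (subsetIl _ _) (subsetUl _ _).
Qed.

Lemma card2I (V : finType) (A : {set V}) (u v : V) :
  u != v -> #|[set u; v] :&: A| = (u \in A) + (v \in A).
Proof.
move=> huv.
have c1 : forall w, #|[set w] :&: A| = (w \in A).
  move=> w; case: (boolP (w \in A)) => H.
    by rewrite (setIidPl _) ?cards1 // sub1set.
  have -> : [set w] :&: A = set0.
    by apply/setP => x; rewrite !inE; case: eqP => // ->; rewrite (negbTE H).
  by rewrite cards0.
rewrite setIUl cardsU !c1.
have -> : [set u] :&: A :&: ([set v] :&: A) = set0.
  apply/setP => x; rewrite !inE; case: (x =P u) => //= ->.
  by rewrite (negbTE huv) andbF.
by rewrite cards0 subn0.
Qed.

Definition fmap (V : finType) (e : rel V) (Y : {ffun edgeT e -> bool})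
  (S : {set V * bool}) (p : V * V) : (V * bool) * (V * bool) :=
  ((p.1, p.1 \in Sb S true), (p.2, (p.1 \in Sb S true) (+) lab Y [set p.1; p.2])).

Lemma fmap_inj (V : finType) (e : rel V) Y (S : {set V * bool}) :
  injective (@fmap V e Y S).
Proof. by move=> [a b] [c d]; rewrite /fmap /= => [[-> _ -> _]]. Qed.

Lemma cut_T (V : finType) (e : rel V) (Y : {ffun edgeT e -> bool}) S :
  cut e (sT S) <= cut (dcover Y) S.
Proof.
rewrite /cut; apply: (card_inj_le (fmap_inj (Y:=Y) (S:=S))) => p; rewrite inE /= => /and3P [h1 h2 h3]; rewrite inE /fmap /=.
rewrite memS_self // memS_notT //= /dcover /= h3 /=.
by case: (p.1 \in Sb S true); case: (lab Y _).
Qed.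

Lemma cut_D (V : finType) (e : rel V) (Y : {ffun edgeT e -> bool}) S :
  cut e (sD S) <= cut (dcover Y) S.
Proof.
pose g (p : V * V) := ((p.1, (p.2 \notin Sb S true) (+) lab Y [set p.1; p.2]),
                       (p.2, p.2 \notin Sb S true)).
have ginj : injective g by move=> [a b] [c d]; rewrite /g /= => [[-> _ -> _]].
rewrite /cut; apply: (card_inj_le ginj) => p; rewrite inE /= => /and3P [h1 h2 h3]; rewrite inE /g /=.
rewrite memS_D //=.
have -> : (p.2, p.2 \notin Sb S true) \notin S.
  case: (boolP (p.2 \in sT S)) => hT; last by apply: memS_notT.
  have hU : p.2 \in sU S by move: hT h2; rewrite !inS; do 2 case: ((p.2, _) \in S).
  by rewrite (memS_U _ hU); case: (p.2 \in Sb S true).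
rewrite /dcover /= h3 /=.
by case: (p.2 \in Sb S true); case: (lab Y _).
Qed.

Lemma cut_C (V : finType) (e : rel V) (A : {set V}) :
  symmetric e -> cut e (~: A) <= cut e A.
Proof.
move=> hs.
have inj : injective (fun p : V * V => (p.2, p.1)) by move=> [a b] [c d] [-> ->].
rewrite /cut; apply: (card_inj_le inj) => p; rewrite !inE /= negbK => /and3P [h1 h2 h3].
by rewrite h2 h1 hs h3.
Qed.

Definition eUout (V : finType) (e : rel V) (S : {set V * bool}) :=
  #|[set p : V * V | [&& p.1 \in sU S, p.2 \notin sT S & e p.1 p.2]]|.
Definition eUD (V : finType) (e : rel V) (S : {set V * bool}) :=
  #|[set p : V * V | [&& p.1 \in sU S, p.2 \in sD S & e p.1 p.2]]|.
Definition PU (V : finType) (e : rel V) (S : {set V * bool}) :=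
  #|[set p : V * V | [&& p.1 \in sU S, p.2 \in sU S & e p.1 p.2]]|.
Definition Mc (V : finType) (e : rel V) (Y : {ffun edgeT e -> bool}) (S : {set V * bool}) :=
  #|[set p : V * V | [&& p.1 \in sU S, p.2 \in sU S, e p.1 p.2 &
      (p.2, (p.1 \in Sb S true) (+) lab Y [set p.1; p.2]) \notin S]]|.

Lemma cut_U (V : finType) (e : rel V) (Y : {ffun edgeT e -> bool}) S :
  eUout e S + Mc Y S <= cut (dcover Y) S.
Proof.
set Q := [set p : V * V | [&& p.1 \in sU S, e p.1 p.2 &
      (p.2, (p.1 \in Sb S true) (+) lab Y [set p.1; p.2]) \notin S]].
have hQ : #|Q| <= cut (dcover Y) S.
  rewrite /cut; apply: (card_inj_le (fmap_inj (Y:=Y) (S:=S))) => p; rewrite /Q inE /= => /and3P [h1 h2 h3]; rewrite inE /fmap /=.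
  rewrite memS_self ?U_sub_T // h3 /= /dcover /= h2 /=.
  by case: (p.1 \in Sb S true); case: (lab Y _).
apply: leq_trans hQ.
rewrite -(cardsID [set p : V * V | p.2 \in sU S] Q) addnC.
apply: leq_add; apply: subset_leq_card; apply/subsetP => p; rewrite !inE.
  by case/and4P => h1 h2 h3 h4; rewrite h1 h2 h3 h4.
case/and3P => h1 h2 h3; rewrite h1 h3 /=.
have h2' : p.2 \notin sU S by apply: contra h2; apply: U_sub_T.
by rewrite h2' memS_notT.
Qed.

Lemma eUD_le (V : finType) (e : rel V) S :
  symmetric e -> eUD e S <= cut e (sD S).
Proof.
move=> hs.
have inj : injective (fun p : V * V => (p.2, p.1)) by move=> [a b] [c d] [-> ->].
rewrite /cut; apply: (card_inj_le inj) => p; rewrite !inE /= => /and3P [h1 h2 h3].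
rewrite hs h3 andbT.
move: h1 h2; rewrite !inS.
by case: ((p.1, false) \in S); case: ((p.1, true) \in S); case: ((p.2, false) \in S);
   case: ((p.2, true) \in S).
Qed.

Lemma degU (V : finType) (e : rel V) (d : nat) S :
  regular e d -> d * #|sU S| <= eUout e S + eUD e S + PU e S.
Proof.
move=> hr.
have h1 : d * #|sU S| = #|[set p : V * V | (p.1 \in sU S) && e p.1 p.2]|.
  rewrite (card_pair (fun x y => (x \in sU S) && e x y)).
  rewrite (eq_bigr (fun x => (x \in sU S) * d)); last first.
    move=> x _; case: (x \in sU S) => /=.
      by rewrite mul1n -(hr x) /deg.
    by rewrite mul0n -(cards0 V); congr #|_|; apply/setP => y; rewrite !inE.
  by rewrite -big_distrl /= -card_sumS mulnC.
rewrite h1 /eUout /eUD /PU.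
apply: leq_trans (leq_trans (cardU_le _ _) (leq_add (cardU_le _ _) (leqnn _))).
apply: subset_leq_card; apply/subsetP => p; rewrite !inE => /andP [h1' h2'].
rewrite h1' h2' /= !andbT.
move: h1'; rewrite !inS.
by case: ((p.1, false) \in S); case: ((p.1, true) \in S); case: ((p.2, false) \in S);
   case: ((p.2, true) \in S).
Qed.

Definition FU (V : finType) (e : rel V) (S : {set V * bool}) : {set edgeT e} :=
  [set f : edgeT e | val f \subset sU S].
Definition tS (V : finType) (e : rel V) (S : {set V * bool}) (f : edgeT e) : bool :=
  #|val f :&: Sb S true| == 1.
Definition XY (V : finType) (e : rel V) (Y : {ffun edgeT e -> bool}) (S : {set V * bool}) :=
  #|[set f in FU e S | Y f != tS S f]|.

Lemma PU_eq (V : finType) (e : rel V) (S : {set V * bool}) :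
  simple_graph e -> PU e S = 2 * #|FU e S|.
Proof.
move=> hsg; rewrite /PU /FU -(fiber2 (fun f : edgeT e => val f \subset sU S)) //.
apply: eq_card => p; rewrite !inE.
case He: (e p.1 p.2); rewrite ?andbF //=.
by rewrite (qo_edge _ (is_edge2 hsg He)) /= subUset !sub1set andbT.
Qed.

Lemma Mc_eq (V : finType) (e : rel V) (Y : {ffun edgeT e -> bool}) (S : {set V * bool}) :
  simple_graph e -> Mc Y S = 2 * XY Y S.
Proof.
move=> hsg; rewrite /Mc /XY.
rewrite -(fiber2 (fun f : edgeT e => (f \in FU e S) && (Y f != tS S f))) //.
apply: eq_card => p; rewrite !inE.
case He: (e p.1 p.2); rewrite ?andbF //=.
have Hie := is_edge2 hsg He.
rewrite (qo_edge _ Hie) (lab_edge Y Hie) /= /FU inE /= subUset !sub1set.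
case: (boolP (p.1 \in sU S)) => h1 //=; case: (boolP (p.2 \in sU S)) => h2 //=.
have huv : p.1 != p.2 by apply/negP => /eqP E; move: He; rewrite E (proj2 hsg).
rewrite /tS /= card2I // (memS_U _ h2) !in_Sb.
by case: ((p.1, true) \in S); case: ((p.2, true) \in S); case: (Y _).
Qed.


Definition cc (varphi : R) : R :=
  Rmin (Rdiv varphi (IZR 4)) (Rdiv (IZR 1) (IZR 32)).

Definition goodb (V : finType) (e : rel V) (varphi : R) (Y : {ffun edgeT e -> bool})
  (S : {set V * bool}) : bool :=
  ~~ (0 < vol (dcover Y) S) || ~~ (2 * vol (dcover Y) S <= vol (dcover Y) setT) ||
  (if Rle_dec (cc varphi) (Rdiv (INR (cut (dcover Y) S)) (INR (vol (dcover Y) S)))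
   then true else false).

Lemma INR_ltn (a b : nat) : (INR a < INR b)%Re -> a < b.
Proof. by move=> h; apply/ltP; apply: INR_lt. Qed.
Lemma INR_leqn (a b : nat) : a <= b -> (INR a <= INR b)%Re.
Proof. by move=> h; apply: le_INR; apply/leP. Qed.

Lemma bad_facts (V : finType) (e : rel V) (d : nat) (varphi : R)
  (Y : {ffun edgeT e -> bool}) (S : {set V * bool}) :
  regular e d -> ~~ goodb varphi Y S ->
  [/\ 0 < d * #|S|, #|S| <= #|V|,
      (4 * INR (cut (dcover Y) S) < varphi * INR (d * #|S|))%Re
    & 32 * cut (dcover Y) S < d * #|S|].
Proof.
move=> hr; rewrite /goodb !negb_or !negbK => /andP [/andP [h1 h2]].
rewrite !(vol_dcover Y _ hr) cardsT card_prod card_bool in h1 h2 *.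
case: Rle_dec => // hn _.
have hs : #|S| <= #|V| by clear -h1 h2; nia.
have hv : (0 < INR (d * #|S|))%Re by apply: lt_0_INR; apply/ltP.
set C := INR (cut (dcover Y) S) in hn *.
have hlt : (C / INR (d * #|S|) < cc varphi)%Re by apply: Rnot_le_lt.
have hC : (C < cc varphi * INR (d * #|S|))%Re.
  by apply: (Rmult_lt_reg_r (/ INR (d * #|S|))); [apply: Rinv_0_lt_compat|
     rewrite Rmult_assoc Rinv_r ?Rmult_1_r //; lra].
have hm1 : (cc varphi <= varphi / 4)%Re by apply: Rmin_l.
have hm2 : (cc varphi <= 1 / 32)%Re by apply: Rmin_r.
split => //.
  have : (cc varphi * INR (d * #|S|) <= varphi / 4 * INR (d * #|S|))%Re.
    by apply: Rmult_le_compat_r; lra.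
  lra.
have : (cc varphi * INR (d * #|S|) <= 1 / 32 * INR (d * #|S|))%Re.
  by apply: Rmult_le_compat_r; lra.
move=> H; apply: INR_ltn.
have -> : INR (32 * cut (dcover Y) S) = (32 * C)%Re.
  rewrite -multE mult_INR; congr (_ * _)%Re; rewrite !S_INR /=; lra.
lra.
Qed.

Lemma cond_mul (phi : R) (a b : nat) :
  (phi <= INR a / INR b)%Re -> 0 < b -> (phi * INR b <= INR a)%Re.
Proof.
move=> h hb.
have hb' : (0 < INR b)%Re by apply: lt_0_INR; apply/ltP.
have := Rmult_le_compat_r (INR b) _ _ (Rlt_le _ _ hb') h.
by rewrite /Rdiv Rmult_assoc Rinv_l ?Rmult_1_r //; lra.
Qed.

Lemma INR_mulc (k x : nat) : INR (k * x) = (INR k * INR x)%Re.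
Proof. by rewrite -multE mult_INR. Qed.

Lemma perS (V : finType) (e : rel V) (d : nat) (varphi : R) (S : {set V * bool}) :
  simple_graph e -> regular e d -> conductance_ge e varphi ->
  (INR #|[set Y : {ffun edgeT e -> bool} | ~~ goodb varphi Y S]|
     <= INR (2 ^ #|edgeT e|) * exp (- (INR (d * #|V|) / 256)))%Re.
Proof.
move=> hsg hr hc.
set B := [set Y : {ffun edgeT e -> bool} | _].
have hE0 : (0 <= INR (2 ^ #|edgeT e|) * exp (- (INR (d * #|V|) / 256)))%Re.
  by apply: Rmult_le_pos; [apply: pos_INR | apply: Rlt_le; apply: exp_pos].
case: (set_0Vmem B) => [-> | [Y0 HY0]]; first by rewrite cards0.
have := HY0; rewrite inE => /(bad_facts hr) [hds hsn h4 h32].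
have cS := cardS2 S; have cTD := cardTD S; have cUD := cardUD S.
have htn : #|sT S| <= #|V| := max_card _.
have hd : 0 < d by clear -hds; nia.
have hvolT : vol e setT = d * #|V| by rewrite (vol_reg _ hr) cardsT.
have hphi : (0 < varphi)%Re.
  have := pos_INR (cut (dcover Y0) S).
  have : (0 < INR (d * #|S|))%Re by apply: lt_0_INR; apply/ltP.
  nra.
have hCr0 := pos_INR (cut (dcover Y0) S).
case: (leqP (2 * #|sT S|) #|V|) => Ht.
  exfalso.
  have h0 : 0 < d * #|sT S| by clear -hd cS cTD cUD hds; nia.
  have h2 : 2 * vol e (sT S) <= vol e setT.
    by rewrite hvolT (vol_reg _ hr); clear -Ht; nia.
  have := hc (sT S); rewrite (vol_reg _ hr) in h2 * => /(_ h0 h2) Hphi.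
  have Hphi' := cond_mul Hphi h0.
  have hcr := INR_leqn (cut_T Y0 S).
  have hsr : (INR (d * #|S|) <= 2 * INR (d * #|sT S|))%Re.
    rewrite -(INR_mulc 2); apply: INR_leqn; clear -cS cTD cUD; nia.
  have : (varphi * INR (d * #|S|) <= varphi * (2 * INR (d * #|sT S|)))%Re.
    by apply: Rmult_le_compat_l; lra.
  lra.
case: (leqP (2 * #|sU S|) #|V|) => Hu.
  exfalso.
  have hCc : #|~: sT S| = #|V| - #|sT S| by have := cardsC (sT S); lia.
  have h0 : 0 < d * #|~: sT S| by rewrite hCc; clear -hd cS cTD cUD hsn Hu hds; nia.
  have h2 : 2 * vol e (~: sT S) <= vol e setT.
    by rewrite hvolT (vol_reg _ hr) hCc; clear -Ht; nia.
  have := hc (~: sT S); rewrite (vol_reg _ hr) in h2 * => /(_ h0 h2) Hphi.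
  have Hphi' := cond_mul Hphi h0.
  have hcr := INR_leqn (cut_T Y0 S).
  have hcc := INR_leqn (cut_C (sT S) (proj1 hsg)).
  have hsr : (INR (d * #|S|) <= 4 * INR (d * #|~: sT S|))%Re.
    have -> : (4 = INR 4)%Re by rewrite !S_INR /=; lra.
    rewrite -(INR_mulc 4); apply: INR_leqn; rewrite hCc.
    clear -cS cTD cUD hsn Hu Ht; nia.
  have : (varphi * INR (d * #|S|) <= varphi * (4 * INR (d * #|~: sT S|)))%Re.
    by apply: Rmult_le_compat_l; lra.
  lra.
have hPU := PU_eq S hsg.
have hdeg := degU S hr.
have hUD := eUD_le S (proj1 hsg).
have key : forall Y, Y \in B -> 16 * (eUD e S + eUout e S + Mc Y S) < d * #|V|.
  move=> Y HY; move: HY; rewrite inE => /(bad_facts hr) [_ hsn' _ h32'].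
  have hD := cut_D Y S; have hU := cut_U Y S.
  have dsn : d * #|S| <= d * #|V| := leq_mul (leqnn d) hsn'.
  clear -hD hU dsn h32' hUD; lia.
set m := #|FU e S|.
set k0 := (d * #|V|) %/ 32.
have hdu : d * #|V| < 2 * (d * #|sU S|).
  rewrite mulnA [2 * d]mulnC -mulnA ltn_pmul2l //.
have hm : 7 * (d * #|V|) < 32 * m.
  have := key Y0 HY0; rewrite hPU in hdeg; clear -hdeg hdu; lia.
have hsub : B \subset [set Y : {ffun edgeT e -> bool} |
                        #|[set f in FU e S | Y f != tS S f]| <= k0].
  apply/subsetP => Y HY; rewrite inE.
  have := key Y HY; rewrite (Mc_eq Y S hsg) /XY /k0.
  clear; set X := #|_|; lia.
have hk0 : k0 <= m by rewrite /k0; clear -hm; lia.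
have hcb := @count_bound _ (FU e S) (tS S) _ hk0.
have hnb : #|B| * 4 ^ m <= 3 ^ m * 2 ^ #|edgeT e| * 2 ^ k0.
  exact: leq_trans (leq_mul (subset_leq_card hsub) (leqnn _)) hcb.
apply: (real_bound hnb); rewrite /k0; clear -hm; lia.
Qed.


Lemma INR_sum_le (I : finType) (F : I -> nat) (Bd : R) :
  (forall i, (INR (F i) <= Bd)%Re) ->
  (INR (\sum_i F i) <= INR #|I| * Bd)%Re.
Proof.
move=> h; rewrite -sum1_card.
apply: (big_rec2 (fun x y => (INR x <= INR y * Bd)%Re)).
  by rewrite /= Rmult_0_l; lra.
move=> i x y _ H; rewrite -!plusE !plus_INR Rmult_plus_distr_r /=.
have := h i; lra.
Qed.

Theorem mainTheorem15 (V : finType) (e : rel V) (d : nat) (varphi : R) :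
  simple_graph e ->
  regular e d ->
  conductance_ge e varphi ->
  exists A : {set {ffun edgeT e -> bool}},
    (forall Y, Y \in A ->
       conductance_ge (dcover Y) (Rmin (Rdiv varphi (IZR 4)) (Rdiv (IZR 1) (IZR 32)))) /\
    Rle (Rminus (IZR 1)
               (Rmult (pow (IZR 2) (2 * #|V|))
                      (exp (Ropp (Rdiv (Rmult (INR d) (INR #|V|)) (IZR 256))))))
        (Rdiv (INR #|A|) (INR (2 ^ #|edgeT e|))).
Proof.
move=> hsg hr hc.
pose A := [set Y : {ffun edgeT e -> bool} | [forall S, goodb varphi Y S]].
exists A; split.
  move=> Y; rewrite inE => /forallP H S h1 h2.
  have := H S; rewrite /goodb h1 h2 /=.
  by case: Rle_dec.
set w := exp (- (INR d * INR #|V| / 256)).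
have hw : w = exp (- (INR (d * #|V|) / 256)) by rewrite INR_mulc.
pose bad S := [set Y : {ffun edgeT e -> bool} | ~~ goodb varphi Y S].
have hbad : forall S, (INR #|bad S| <= INR (2 ^ #|edgeT e|) * w)%Re.
  by move=> S; rewrite hw; apply: perS.
have hcomp : #|~: A| <= \sum_S #|bad S|.
  rewrite card_sumS (eq_bigr (fun S => \sum_Y ((Y \in bad S) : nat))); last first.
    by move=> S _; rewrite card_sumS.
  rewrite exchange_big /=; apply: leq_sum => Y _.
  rewrite !inE; case: (boolP [forall S, goodb varphi Y S]) => //= /forallPn [S HS].
  by rewrite (bigD1 S) //= inE HS.
have hsum := @INR_sum_le _ (fun S => #|bad S|) _ hbad.
have hcard : #|A| + #|~: A| = 2 ^ #|edgeT e| by rewrite cardsC card_ffun card_bool.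
have hW : #|{set V * bool}| = 2 ^ (2 * #|V|).
  have := card_powerset [set: V * bool]; rewrite powersetT !cardsT => ->.
  by rewrite card_prod card_bool mulnC.
rewrite hW INR_expn in hsum.
have h2 : INR 2 = 2%Re by rewrite /=; lra.
rewrite h2 in hsum.
have hE : (0 < INR (2 ^ #|edgeT e|))%Re.
  by apply: lt_0_INR; apply/ltP; rewrite expn_gt0.
have hA : (INR (2 ^ #|edgeT e|) - INR (\sum_S #|bad S|) <= INR #|A|)%Re.
  have : INR (2 ^ #|edgeT e|) = (INR #|A| + INR #|~: A|)%Re.
    by rewrite -hcard -plusE plus_INR.
  have := INR_leqn hcomp; lra.
apply: (Rmult_le_reg_r (INR (2 ^ #|edgeT e|))) => //.
rewrite /Rdiv Rmult_assoc Rinv_l; last by lra.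
rewrite Rmult_1_r.
have : (pow 2 (2 * #|V|) * (INR (2 ^ #|edgeT e|) * w) =
        (pow 2 (2 * #|V|) * w) * INR (2 ^ #|edgeT e|))%Re by ring.
have hs : (INR (\sum_S #|bad S|) <= pow 2 (2 * #|V|) * (INR (2 ^ #|edgeT e|) * w))%Re := hsum.
move=> Heq; rewrite Rmult_minus_distr_r Rmult_1_l -Heq.
apply: Rle_trans _ hA; apply: Rplus_le_compat_l; apply: Ropp_le_contravar; exact: hs.
Qed.
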